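(* Let $P\in\mathbb{C}[X_1,\dots,X_n]_{int}$ be an internal polynomial of degree $d\in{}^*\mathbb{N}$. Then (i) $P$ is bounded if and only if $P$ is absolutely bounded; (ii) $P$ is infinitesimal if and only if $P$ is absolutely infinitesimal.
   Context: ${}^*\mathbb{C}$ is an ultrapower of $\mathbb{C}$ by a nonprincipal ultrafilter; ${}^b\mathbb{C}$ (resp. ${}^i\mathbb{C}$) denotes the elements $z$ with $|z|\le r$ for some standard real $r$ (resp. $|z|<r$ for every standard real $r>0$). For finite $n$, $\mathbb{C}[X_1,\dots,X_n]_{int}$ is the ultrapower of $\mathbb{C}[X_1,\dots,X_n]$; an internal polynomial $P=\sum_{|\nu|\le d}a_\nu X^\nu$ ($a_\nu\in{}^*\mathbb{C}$, $\nu\in{}^*\mathbb{N}^n$) is viewed as an internal function ${}^*\mathbb{C}^n\to{}^*\mathbb{C}$, and $|P|:=\sum_{|\nu|\le d}|a_\nu|X^\nu$. $P$ is bounded (resp. infinitesimal) if $P({}^b\mathbb{C}^n)\subset{}^b\mathbb{C}$ (resp. $\subset{}^i\mathbb{C}$), and absolutely bounded (resp. absolutely infinitesimal) if $|P|({}^b\mathbb{C}^n)\subset{}^b\mathbb{C}$ (resp. $\subset{}^i\mathbb{C}$). *)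

(* Defs.v *)
From HB Require Import structures.
From mathcomp Require Import all_boot all_order all_algebra.
From mathcomp Require Import reals.
From mathcomp Require Import complex.
From mathcomp Require Import mpoly.
Set Implicit Arguments. Unset Strict Implicit. Unset Printing Implicit Defensive.
Import Order.TTheory GRing.Theory Num.Theory.
Local Open Scope ring_scope.
Local Open Scope complex_scope.

Definition is_ultrafilter (I : Type) (U : (I -> Prop) -> Prop) : Prop :=
  [/\ U (fun _ => True),
      ~ U (fun _ => False),
      (forall A B : I -> Prop, U A -> U B -> U (fun i => A i /\ B i)),
      (forall A B : I -> Prop, (forall i, A i -> B i) -> U A -> U B)
    & (forall A : I -> Prop, U A \/ U (fun i => ~ A i))].

Definition nonprincipal (I : Type) (U : (I -> Prop) -> Prop) : Prop :=
  forall i0 : I, ~ U (fun i => i = i0).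

Section Ultra.
Variables (R : realType) (I : Type) (U : (I -> Prop) -> Prop).

(* Elements of *C are represented by sequences I -> R[i] (modulo U);
   all predicates below are invariant under U-a.e. equality. *)

Definition hbounded (z : I -> R[i]) : Prop :=
  exists r : R, U (fun i => `|z i| <= r%:C).

Definition hinfinitesimal (z : I -> R[i]) : Prop :=
  forall r : R, 0 < r -> U (fun i => `|z i| < r%:C).

Variable n : nat.

Definition hbounded_pt (z : I -> 'I_n -> R[i]) : Prop :=
  forall j : 'I_n, hbounded (fun i => z i j).

Definition abs_mpoly (p : {mpoly R[i][n]}) : {mpoly R[i][n]} :=
  \sum_(m <- msupp p) `|p@_m| *: 'X_[m].

(* An internal polynomial is represented by I -> {mpoly R[i][n]}
   (the ultrapower of C[X_1..X_n]); it acts on internal points pointwise. *)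
Definition ipoly_eval (P : I -> {mpoly R[i][n]}) (z : I -> 'I_n -> R[i])
  : I -> R[i] := fun i => (P i).@[z i].

Definition ipoly_abs (P : I -> {mpoly R[i][n]}) : I -> {mpoly R[i][n]} :=
  fun i => abs_mpoly (P i).

Definition ipoly_bounded (P : I -> {mpoly R[i][n]}) : Prop :=
  forall z, hbounded_pt z -> hbounded (ipoly_eval P z).

Definition ipoly_infinitesimal (P : I -> {mpoly R[i][n]}) : Prop :=
  forall z, hbounded_pt z -> hinfinitesimal (ipoly_eval P z).

Definition ipoly_abs_bounded (P : I -> {mpoly R[i][n]}) : Prop :=
  ipoly_bounded (ipoly_abs P).

Definition ipoly_abs_infinitesimal (P : I -> {mpoly R[i][n]}) : Prop :=
  ipoly_infinitesimal (ipoly_abs P).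

End Ultra.

(* Main.v *)
Require Import Defs.
From HB Require Import structures.
From mathcomp Require Import all_boot all_order all_algebra all_fingroup all_solvable all_field.
From mathcomp Require Import reals.
From mathcomp Require Import complex.
From mathcomp Require Import mpoly.
From mathcomp Require Import zify.
From Stdlib Require Import ClassicalEpsilon.
Set Implicit Arguments. Unset Strict Implicit. Unset Printing Implicit Defensive.
Import Order.TTheory GRing.Theory Num.Theory.
Local Open Scope ring_scope.
Local Open Scope complex_scope.

Section S.
Variable R : realType.
Local Notation C := (R[i]).
Lemma prim_exists (N : nat) : (N > 0)%N -> {z : C | N.-primitive_root z}.
Proof.
pose p : {poly C} := 'X^N - 1; have [r Dp] := closed_field_poly_normal p.
move=> n_gt0; apply/sigW; rewrite (monicP _) ?monicXnsubC // scale1r in Dp.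
have rn1: all N.-unity_root r by apply/allP=> z; rewrite -root_prod_XsubC -Dp.
have sz_r: (N < (size r).+1)%N.
  by rewrite -(size_prod_XsubC r id) -Dp size_XnsubC.
have [|z] := hasP (has_prim_root n_gt0 rn1 _ sz_r); last by exists z.
by rewrite -separable_prod_XsubC -Dp separable_Xn_sub_1 // pnatr_eq0 -lt0n.
Qed.

Lemma geom_sum (N e : nat) (w : C) : N.-primitive_root w ->
  \sum_(a < N) w ^+ (a * e) = if (N %| e)%N then N%:R else 0.
Proof.
move=> pw.
have N0 : (0 < N)%N by exact: prim_order_gt0 pw.
under eq_bigr do rewrite mulnC exprM.
case: ifP => hd.
  have -> : w ^+ e = 1.
    by apply/eqP; rewrite -(expr0 w) (eq_prim_root_expr pw) mod0n; apply/eqP/eqP; rewrite -/(dvdn N e) hd.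
  by rewrite (eq_bigr (fun _ => 1)) ?sumr_const ?card_ord // => a _; rewrite expr1n.
have h1 : w ^+ e != 1.
  by rewrite -(expr0 w) (eq_prim_root_expr pw) mod0n; apply/negP => /eqP h; move: hd; rewrite /dvdn h eqxx.
have : (w ^+ e - 1) * \sum_(a < N) (w ^+ e) ^+ a = 0.
  by rewrite -subrX1 -exprM mulnC exprM (prim_expr_order pw) expr1n subrr.
by move/eqP; rewrite mulf_eq0 subr_eq0 (negbTE h1) /= => /eqP.
Qed.

Lemma exists_max (J : finType) (j1 : J) (F : J -> C) :
  (forall j, 0 <= F j) -> exists j0, forall j, F j <= F j0.
Proof.
move=> F0.
suff [j0 Hj0] : exists j0, forall j, j \in enum J -> F j <= F j0.
  by exists j0 => j; apply: Hj0; rewrite mem_enum.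
elim: (enum J) => [|x s [j0 IH]]; first by exists j1.
have /orP [h|h] := real_leVge (ger0_real (F0 x)) (ger0_real (F0 j0)).
  exists j0 => j; rewrite inE => /orP [/eqP -> //|]; exact: IH.
exists x => j; rewrite inE => /orP [/eqP -> //|/IH hj]; exact: le_trans hj h.
Qed.

Lemma coef_extract (n : nat) (p : {mpoly C[n]}) (m : 'X_{1..n}) (g : 'X_{1..n} -> C) :
  \sum_(k <- msupp p) p@_k * g k * (k == m)%:R = p@_m * g m.
Proof.
have -> : p@_m = \sum_(k <- msupp p) p@_k * (k == m)%:R.
  rewrite {1}(mpolyE p) raddf_sum; by apply: eq_bigr => k _; rewrite /= mcoeffZ mcoeffX.
rewrite mulr_suml; apply: eq_bigr => k _.
by case: eqP => [->|_]; rewrite ?eqxx /= ?mulr1 ?mulr0 ?mul0r.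
Qed.

Lemma prod_indic (n N : nat) (k m : 'X_{1..n}) :
  (forall l, (k l < N)%N) -> (forall l, (m l < N)%N) ->
  \prod_(l < n) (if (N %| k l + (N - m l))%N then N%:R else 0 : C)
   = (k == m)%:R * N%:R ^+ n.
Proof.
move=> hk hm.
case: (eqVneq k m) => [->|ne].
  rewrite mul1r -[in RHS](card_ord n) -prodr_const.
  by apply: eq_bigr => l _; rewrite subnKC ?dvdnn // ltnW.
rewrite mul0r.
have [l hl] : exists l, k l != m l.
  apply/existsP; apply/negP => /forallP h; move/negP: ne; apply; apply/eqP/mnmP => l.
  by move: (h l) => /eqP.
rewrite (bigD1 l) //= ifF ?mul0r //.
apply/negP => hd; move: (hk l) (hm l) hl hd.
move: (k l) (m l) => a b ha hb /eqP hab /dvdnP [q hq].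
case: q hq => [|[|q]] hq; lia.
Qed.


Lemma torus_id (n N : nat) (om rho : C) (p : {mpoly C[n]}) (m : 'X_{1..n}) :
  N.-primitive_root om -> (forall k, k \in msupp p -> forall l, (k l < N)%N) ->
  (forall l, (m l < N)%N) ->
  \sum_(j : {ffun 'I_n -> 'I_N}) p.@[fun l => rho * om ^+ j l] * \prod_l om ^+ (j l * (N - m l))
  = p@_m * \prod_l rho ^+ (m l) * N%:R ^+ n.
Proof.
move=> pom hsupp hm.
rewrite (eq_bigr (fun j : {ffun 'I_n -> 'I_N} => \sum_(k <- msupp p) p@_k * (\prod_i (rho * om ^+ j i) ^+ k i) * \prod_l om ^+ (j l * (N - m l)))); last by move=> j _; rewrite mevalE mulr_suml.
rewrite exchange_big /=.
rewrite -(coef_extract p m (fun k => \prod_l rho ^+ (k l))) mulr_suml.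
rewrite !big_seq; apply: eq_bigr => k hk.
have -> : \sum_(j : {ffun 'I_n -> 'I_N}) p@_k * (\prod_i (rho * om ^+ j i) ^+ k i) *
            (\prod_l om ^+ (j l * (N - m l)))
   = p@_k * (\prod_l rho ^+ (k l)) * \sum_(j : {ffun 'I_n -> 'I_N}) \prod_l om ^+ (j l * (k l + (N - m l))).
  rewrite mulr_sumr; apply: eq_bigr => j _.
  rewrite -!mulrA; congr (_ * _); rewrite -!big_split /=; apply: eq_bigr => l _.
  by rewrite exprMn -mulrA -!exprM -exprD mulnDr.
rewrite -(bigA_distr_bigA (fun l (a : 'I_N) => om ^+ (a * (k l + (N - m l))))) /=.
rewrite [X in _ * X = _](eq_bigr (fun l => if (N %| k l + (N - m l))%N then N%:R else 0 : C)); last by move=> l _; rewrite (geom_sum _ pom).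
by rewrite (prod_indic (hsupp k hk) hm) mulrA.
Qed.

Lemma key (n : nat) (p : {mpoly C[n]}) (rho : C) : 0 <= rho ->
  exists w : 'I_n -> C, (forall l, `|w l| = rho) /\
   forall m, `|p@_m| * \prod_l rho ^+ (m l) <= `|p.@[w]|.
Proof.
move=> rho0.
pose N := (msize p).+1.
have N0 : (0 < N)%N by [].
have [om pom] := prim_exists N0.
have nom : `|om| = 1.
  by apply/eqP; rewrite -(pexpr_eq1 N0) ?normr_ge0 // -normrX (prim_expr_order pom) normr1.
pose T (j : {ffun 'I_n -> 'I_N}) := fun l => rho * om ^+ j l.
have nT : forall j l, `|T j l| = rho.
  by move=> j l; rewrite normrM normrX nom expr1n mulr1 ger0_norm.
have [j0 hj0] := exists_max [ffun=> ord0] (fun j => normr_ge0 (p.@[T j])).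
exists (T j0); split => // m.
have hsupp : forall k, k \in msupp p -> forall l, (k l < N)%N.
  move=> k hk l; have := msize_mdeg_lt hk; rewrite mdegE (bigD1 l) //= /N; lia.
case: (boolP (m \in msupp p)) => hm; last first.
  have -> : p@_m = 0 by apply/eqP; rewrite mcoeff_eq0.
  by rewrite normr0 mul0r normr_ge0.
have hmN := hsupp m hm.
have idt := torus_id rho pom hsupp hmN.
have Npos : 0 < (N%:R : C) ^+ n by rewrite exprn_gt0 // ltr0n.
rewrite -(ler_pM2r Npos).
have -> : `|p@_m| * \prod_l rho ^+ m l * N%:R ^+ n = `|p@_m * \prod_l rho ^+ m l * N%:R ^+ n|.
  have hP : 0 <= \prod_l rho ^+ m l by apply: prodr_ge0 => l _; rewrite exprn_ge0.
  by rewrite !normrM (ger0_norm (ltW Npos)) (ger0_norm hP).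
rewrite -idt.
apply: le_trans (ler_norm_sum _ _ _) _.
rewrite (eq_bigr (fun j => `|p.@[T j]|)); last first.
  move=> j _; rewrite normrM normr_prod big1 ?mulr1 // => l _.
  by rewrite normrX nom expr1n.
apply: le_trans (ler_sum _ (fun j _ => hj0 j)) _.
by rewrite sumr_const card_ffun !card_ord -natrX mulr_natr.
Qed.

Lemma eval_abs (n : nat) (p : {mpoly C[n]}) v :
  (abs_mpoly p).@[v] = \sum_(m <- msupp p) `|p@_m| * \prod_i v i ^+ m i.
Proof.
rewrite /abs_mpoly raddf_sum; apply: eq_bigr => m _.
by rewrite /= mevalZ mevalX.
Qed.

Lemma half_sum (N : nat) : \sum_(a < N) (2^-1 : C) ^+ a = 2 - 2 * (2^-1) ^+ N.
Proof.
elim: N => [|N IH]; first by rewrite big_ord0 expr0 mulr1 subrr.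
rewrite big_ord_recr /= IH exprS.
have h : (2 : C) != 0 by rewrite pnatr_eq0.
set x := (2^-1 : C) ^+ N.
rewrite mulrA mulfV // mul1r.
rewrite -addrA; congr (_ + _).
have -> : (2 : C) * x = x + x by rewrite mulr2n mulrDl mul1r.
by rewrite opprD addrNK.
Qed.

Lemma half_sum_le (N : nat) : \sum_(a < N) (2^-1 : C) ^+ a <= 2.
Proof.
rewrite half_sum lerBlDr lerDl; apply: mulr_ge0 => //; apply: exprn_ge0.
by rewrite invr_ge0.
Qed.

Lemma sum_sub_le (J : finType) (t : seq J) (F : J -> C) :
  uniq t -> (forall j, 0 <= F j) -> \sum_(j <- t) F j <= \sum_j F j.
Proof.
move=> ut F0; rewrite big_uniq // [X in _ <= X](bigID (fun j => j \in t)) /=.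
by rewrite lerDl sumr_ge0.
Qed.

Lemma geom_le (n : nat) (s : seq 'X_{1..n}) : uniq s ->
  \sum_(m <- s) \prod_(l < n) (2^-1 : C) ^+ (m l) <= 2 ^+ n.
Proof.
move=> us.
pose K := (\sum_(m <- s) mdeg m)%N.
have hK : forall m, m \in s -> forall l, (m l < K.+1)%N.
  move=> m hm l; rewrite ltnS /K (big_rem m hm) /=.
  apply: leq_trans (leq_addr _ _); rewrite mdegE (bigD1 l) //=; exact: leq_addr.
pose phi (m : 'X_{1..n}) : {ffun 'I_n -> 'I_K.+1} := [ffun l => inord (m l)].
have phiE : forall m, m \in s -> forall l, (phi m l : nat) = m l.
  by move=> m hm l; rewrite /phi ffunE inordK // hK.
have -> : \sum_(m <- s) \prod_(l < n) (2^-1 : C) ^+ (m l)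
        = \sum_(f <- map phi s) \prod_(l < n) (2^-1 : C) ^+ (f l).
  rewrite big_map !big_seq; apply: eq_bigr => m hm; apply: eq_bigr => l _.
  by rewrite phiE.
have uphi : uniq (map phi s).
  rewrite map_inj_in_uniq // => m1 m2 h1 h2 e; apply/mnmP => l.
  by rewrite -(phiE _ h1) -(phiE _ h2) e.
apply: le_trans (sum_sub_le (F := fun f : {ffun 'I_n -> 'I_K.+1} => \prod_(l < n) (2^-1 : C) ^+ (f l)) uphi _) _.
  by move=> f; apply: prodr_ge0 => l _; apply: exprn_ge0; rewrite invr_ge0.
rewrite -(bigA_distr_bigA (fun (l : 'I_n) (a : 'I_K.+1) => (2^-1 : C) ^+ a)) /=.
rewrite -[in X in _ <= X](card_ord n) -prodr_const.
apply: ler_prod => l _; rewrite half_sum_le andbT.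
by apply: sumr_ge0 => a _; apply: exprn_ge0; rewrite invr_ge0.
Qed.

Lemma core (n : nat) (p : {mpoly C[n]}) (r : C) (x w : 'I_n -> C) : 0 <= r ->
  (forall l, `|x l| <= r) ->
  (forall m, `|p@_m| * \prod_l (2 * r) ^+ (m l) <= `|p.@[w]|) ->
  `|(abs_mpoly p).@[x]| <= `|p.@[w]| * 2 ^+ n.
Proof.
move=> r0 hx hw.
rewrite eval_abs.
apply: le_trans (ler_norm_sum _ _ _) _.
apply: (@le_trans _ _ (\sum_(m <- msupp p) `|p.@[w]| * \prod_l (2^-1 : C) ^+ (m l))); last first.
  by rewrite -mulr_sumr; apply: ler_wpM2l => //; exact: geom_le (msupp_uniq p).
apply: ler_sum => m _.
rewrite normrM normr_id normr_prod.
have e : \prod_l r ^+ (m l) = \prod_l (2 * r) ^+ (m l) * \prod_l (2^-1) ^+ (m l).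
  rewrite -big_split; apply: eq_bigr => l _.
  by rewrite /= -exprMn [2 * r]mulrC -mulrA mulfV ?mulr1 // pnatr_eq0.
apply: (@le_trans _ _ (`|p@_m| * \prod_l r ^+ (m l))).
  apply: ler_wpM2l => //; apply: ler_prod => l _; rewrite normrX exprn_ge0 //=.
  by apply: lerXn2r; rewrite ?nnegrE.
rewrite e mulrA; apply: ler_wpM2r; last exact: hw.
by apply: prodr_ge0 => l _; apply: exprn_ge0; rewrite invr_ge0.
Qed.

Lemma tri (n : nat) (p : {mpoly C[n]}) (v : 'I_n -> C) :
  `|p.@[v]| <= `|(abs_mpoly p).@[fun l => `|v l|]|.
Proof.
rewrite eval_abs.
have h0 : 0 <= \sum_(m <- msupp p) `|p@_m| * \prod_i `|v i| ^+ m i.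
  apply: sumr_ge0 => m _; apply: mulr_ge0 => //; apply: prodr_ge0 => l _.
  exact: exprn_ge0.
rewrite (ger0_norm h0) mevalE; apply: le_trans (ler_norm_sum _ _ _) _.
apply: ler_sum => m _; rewrite normrM normr_prod; apply: ler_wpM2l => //.
by under eq_bigr do rewrite normrX.
Qed.
End S.

Section U.
Variables (I : Type) (U : (I -> Prop) -> Prop).
Hypothesis hU : is_ultrafilter U.

Lemma U_mono (A B : I -> Prop) : (forall i, A i -> B i) -> U A -> U B.
Proof. by case: hU => _ _ _ h _; apply: h. Qed.

Lemma U_and (A B : I -> Prop) : U A -> U B -> U (fun i => A i /\ B i).
Proof. by case: hU => _ _ h _ _; apply: h. Qed.

Lemma U_true (A : I -> Prop) : (forall i, A i) -> U A.
Proof. by case: hU => h _ _ _ _ hA; apply: U_mono h. Qed.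

Lemma bound_pt (R : realType) (n : nat) (z : I -> 'I_n -> R[i]) :
  hbounded_pt U z -> exists r : R, 0 < r /\ U (fun i => forall l, `|z i l| <= r%:C).
Proof.
move=> hz.
suff [r [r0 hr]] : exists r : R, 0 < r /\ U (fun i => forall l, l \in enum 'I_n -> `|z i l| <= r%:C).
  by exists r; split => //; apply: U_mono hr => i h l; apply: h; rewrite mem_enum.
elim: (enum 'I_n) => [|x s [r [r0 hr]]].
  by exists 1; split => //; apply: U_true.
have [r' hr'] := hz x.
exists (r + `|r'|); split; first by rewrite ltr_wpDr.
apply: U_mono (U_and hr hr') => i [h1 h2] l; rewrite inE => /orP [/eqP ->|hl].
  apply: le_trans h2 _; rewrite lecR; apply: le_trans (ler_norm r') _.
  by rewrite lerDr ltW.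
by apply: le_trans (h1 l hl) _; rewrite lecR lerDl.
Qed.
End U.

Lemma realC_mul (R : realType) (a b : R) : (a * b)%:C = a%:C * b%:C.
Proof. by rewrite rmorphM. Qed.
Lemma realC_nat (R : realType) (k : nat) : (k%:R : R)%:C = k%:R.
Proof. by rewrite rmorph_nat. Qed.
Lemma realC_exp (R : realType) (a : R) k : (a ^+ k)%:C = a%:C ^+ k.
Proof. by rewrite rmorphXn. Qed.

Lemma hard_common (R : realType) (I : Type) (U : (I -> Prop) -> Prop)
  (hU : is_ultrafilter U) (n : nat) (P : I -> {mpoly R[i][n]}) (z : I -> 'I_n -> R[i]) :
  hbounded_pt U z -> exists w, hbounded_pt U w /\
   U (fun i => `|(abs_mpoly (P i)).@[z i]| <= `|(P i).@[w i]| * 2 ^+ n).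
Proof.
move=> hz.
have [r [r0 hr]] := bound_pt hU hz.
have hk : forall i, exists w : 'I_n -> R[i], (forall l, `|w l| = 2 * r%:C) /\
    forall m, `|(P i)@_m| * \prod_l (2 * r%:C) ^+ (m l) <= `|(P i).@[w]|.
  by move=> i; apply: key; rewrite mulr_ge0 // ler0c ltW.
pose w i := proj1_sig (constructive_indefinite_description _ (hk i)).
have hw i : (forall l, `|w i l| = 2 * r%:C) /\
    forall m, `|(P i)@_m| * \prod_l (2 * r%:C) ^+ (m l) <= `|(P i).@[w i]|.
  exact: proj2_sig (constructive_indefinite_description _ (hk i)).
exists w; split.
  move=> l; exists (2 * r); apply: U_true => // i; have [h _] := hw i.
  by rewrite h realC_mul realC_nat.
apply: U_mono hr => // i hi; have [_ h] := hw i; apply: core h => //.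
by rewrite ler0c ltW.
Qed.

Unset Implicit Arguments.

Theorem proposition1p4p4 (R : realType) (I : Type) (U : (I -> Prop) -> Prop)
  (hU : is_ultrafilter U) (hfree : nonprincipal U)
  (n : nat) (P : I -> {mpoly R[i][n]}) :
  (ipoly_bounded U P <-> ipoly_abs_bounded U P) /\
  (ipoly_infinitesimal U P <-> ipoly_abs_infinitesimal U P).
Proof.
have habs : forall z : I -> 'I_n -> R[i], hbounded_pt U z -> hbounded_pt U (fun i l => `|z i l|).
  move=> z hz l; have [r hr] := hz l; exists r; apply: (U_mono hU _ hr) => i.
  by rewrite normr_id.
have two0 : (0 : R[i]) < 2 ^+ n by rewrite exprn_gt0 // ltr0n.
split; split.
- move=> hb z hz; have [w [hwb hU1]] := hard_common hU P hz.
  have [M hM] := hb w hwb.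
  exists (M * 2 ^+ n); apply: (U_mono hU _ (U_and hU hU1 hM)) => i [h1 h2].
  rewrite /ipoly_eval /ipoly_abs; apply: le_trans h1 _.
  by rewrite realC_mul realC_exp realC_nat ler_wpM2r // ltW.
- move=> hb z hz; have [M hM] := hb _ (habs z hz).
  exists M; apply: (U_mono hU _ hM) => i h; exact: le_trans (tri _ _) h.
- move=> hb z hz eps e0; have [w [hwb hU1]] := hard_common hU P hz.
  have hM := hb w hwb (eps / 2 ^+ n) (divr_gt0 e0 (exprn_gt0 _ (ltr0n _ 2))).
  apply: (U_mono hU _ (U_and hU hU1 hM)) => i [h1 h2].
  have e : eps%:C = (eps / 2 ^+ n)%:C * 2 ^+ n.
    by rewrite -realC_nat -realC_exp -realC_mul divfK // expf_neq0 // pnatr_eq0.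
  rewrite /ipoly_eval /ipoly_abs; apply: le_lt_trans h1 _.
  by rewrite e ltr_pM2r.
- move=> hb z hz eps e0; have hM := hb _ (habs z hz) eps e0.
  apply: (U_mono hU _ hM) => i h; exact: le_lt_trans (tri _ _) h.
Qed.
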